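(* Let $(X,d)$ be a compact metric space and $\mathcal A\subset\mathcal K(X)$ a nonempty set with the finite union property. Then $$\underline{\mathrm{mo}}(\mathcal A,H)\ge\liminf_{\varepsilon\to0}\frac{\log B(\mathcal A,\varepsilon)}{-\log\varepsilon}.$$
   Context: $\mathcal K(X)$ is the space of nonempty closed subsets of $X$ with Hausdorff metric $H$. $\mathcal A$ has the finite union property if $B\cup C\in\mathcal A$ whenever $B,C\in\mathcal A$. $B,C\in\mathcal K(X)$ are $\varepsilon$-split if $\min\{d(x,y):x\in B,y\in C\}>\varepsilon$; $B(\mathcal A,\varepsilon)$ is the maximal number of pairwise $\varepsilon$-split elements of $\mathcal A$. $N(\mathcal A,\varepsilon)$ is the smallest cardinality of $E\subset\mathcal K(X)$ with $\mathcal A$ covered by the $H$-balls of radius $\varepsilon$ centered in $E$, and $\underline{\mathrm{mo}}(\mathcal A,H)=\liminf_{\varepsilon\to0}\frac{\log\log N(\mathcal A,\varepsilon)}{-\log\varepsilon}$. *)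

(* Defs.v *)
From HB Require Import structures.
From mathcomp Require Import all_boot all_order all_algebra.
From mathcomp Require Import all_classical all_reals all_analysis.
Set Implicit Arguments. Unset Strict Implicit. Unset Printing Implicit Defensive.
Import Order.TTheory GRing.Theory Num.Theory.
Import numFieldNormedType.Exports.
Local Open Scope classical_set_scope.
Local Open Scope ring_scope.

Section Defs.
Variables (R : realType) (X : Type) (d : X -> X -> R).

Definition is_metric : Prop :=
  [/\ forall x y, 0 <= d x y,
      forall x y, d x y = 0 <-> x = y,
      forall x y, d x y = d y x &
      forall x y z, d x z <= d x y + d y z].

Definition d_open (U : set X) : Prop :=
  forall x, U x -> exists2 r : R, 0 < r & forall y, d x y < r -> U y.

Definition d_compact : Prop :=
  forall (I : Type) (U : I -> set X), (forall i, d_open (U i)) ->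
    (forall x, exists i, U i x) ->
    exists2 F : set I, finite_set F & forall x, exists2 i, F i & U i x.

Definition d_closed (K : set X) : Prop :=
  forall x, (forall e : R, 0 < e -> exists2 y, K y & d x y < e) -> K x.

Definition KX : set (set X) := [set K | K !=set0 /\ d_closed K].

Definition dist_pt (x : X) (K : set X) : R := inf [set d x y | y in K].

Definition hausdorff (K L : set X) : R :=
  Num.max (sup [set dist_pt x L | x in K]) (sup [set dist_pt y K | y in L]).

Definition finite_union_property (A : set (set X)) : Prop :=
  forall B C, A B -> A C -> A (B `|` C).

Definition split (eps : R) (B C : set X) : Prop :=
  eps < inf [set d x y | x in B & y in C].

Definition Bnum (A : set (set X)) (eps : R) : \bar R :=
  ereal_sup [set ((size s)%:R)%:E | s in
    [set s : seq (set X) | (forall K, K \in s -> A K) /\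
       (forall i j, (i < j < size s)%N -> split eps (nth set0 s i) (nth set0 s j))]].

Definition Ncov (A : set (set X)) (eps : R) : \bar R :=
  ereal_inf [set ((size E)%:R)%:E | E in
    [set E : seq (set X) | (forall C, C \in E -> KX C) /\
       (forall K, A K -> exists2 C, C \in E & hausdorff K C < eps)]].

Definition lower_mo (A : set (set X)) : \bar R :=
  limf_einf (fun eps : R => ((ln (ln (fine (Ncov A eps)))) / (- ln eps))%:E) (0^'+).

Definition lower_B_dim (A : set (set X)) : \bar R :=
  limf_einf (fun eps : R => ((ln (fine (Bnum A eps))) / (- ln eps))%:E) (0^'+).

End Defs.

(* Main.v *)
Require Import Defs.
From HB Require Import structures.
From mathcomp Require Import all_boot all_order all_algebra.
From mathcomp Require Import all_classical all_reals all_analysis.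
Import Order.TTheory GRing.Theory Num.Theory.
Local Open Scope classical_set_scope.
Local Open Scope ring_scope.
From mathcomp Require Import ring lra zify.

Lemma dist_le (R : realType) (X : Type) (d : X -> X -> R) (hm : is_metric d)
  (K : set X) x y : K y -> dist_pt d x K <= d x y.
Proof.
case: hm => d0 _ _ _ Ky; rewrite /dist_pt; apply: ge_inf; last by exists y.
by exists 0 => _ [z _ <-]; apply: d0.
Qed.

Lemma dist_lt (R : realType) (X : Type) (d : X -> X -> R)
  (K : set X) x e : K !=set0 -> dist_pt d x K < e -> exists2 y, K y & d x y < e.
Proof.
move=> [y Ky] /inf_lt[]; first by exists (d x y), y.
by move=> _ [z Kz <-] h; exists z.
Qed.

Lemma dist_ge0 (R : realType) (X : Type) (d : X -> X -> R) (hm : is_metric d)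
  (K : set X) x : K !=set0 -> 0 <= dist_pt d x K.
Proof.
case: hm => d0 _ _ _ [y Ky]; apply: lb_le_inf; first by exists (d x y), y.
by move=> _ [z _ <-]; apply: d0.
Qed.

Lemma fin_enum (T : Type) (F : set T) : finite_set F ->
  exists n (p : 'I_n -> T), forall x, F x -> exists i, p i = x.
Proof.
move=> /finite_setP[n]; rewrite (card_eqr card_II) => /card_esym/card_eqVP[f].
pose g := f \o to_setT.
exists n, (fun i => val (g i)) => x Fx.
exists ((g^-1)%FUN (SigSub (mem_set Fx))).
by rewrite [g _]invK //= inE.
Qed.
Arguments dist_le {R X d} hm {K x y}.
Arguments dist_lt {R X d K x e}.
Arguments dist_ge0 {R X d} hm {K} x.


Lemma le_sum_term (R : realType) m (F : 'I_m -> R) i :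
  (forall j, 0 <= F j) -> F i <= \sum_(j < m) F j.
Proof.
move=> F0; rewrite (bigD1 i) //= lerDl; apply: sumr_ge0 => j _; exact: F0.
Qed.

Arguments le_sum_term {R m} F i.

Lemma net (R : realType) (X : Type) (d : X -> X -> R) (hm : is_metric d)
  (hc : d_compact d) r : 0 < r ->
  exists m (p : 'I_m -> X), forall x, exists i, d x (p i) < r.
Proof.
case: (hm) => d0 deq dsym dtri r0.
have [] := hc X (fun c => [set y | d c y < r]).
- move=> c y /= cy; exists (r - d c y); first by rewrite subr_gt0.
  move=> z yz; apply: (le_lt_trans (dtri c y z)).
  by rewrite -ltrBrDl.
- by move=> x; exists x => /=; rewrite (proj2 (deq x x) erefl).
move=> F /fin_enum [m [p hp]] hF; exists m, p => x.
have [c Fc cx] := hF x; have [i pic] := hp c Fc.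
by exists i; rewrite pic dsym.
Qed.

Arguments net {R X d} hm hc r.

Lemma dbound (R : realType) (X : Type) (d : X -> X -> R) (hm : is_metric d)
  (hc : d_compact d) : exists D, forall x y, d x y <= D.
Proof.
case: (hm) => d0 deq dsym dtri.
have [m [p hp]] := net hm hc 1 ltr01.
exists (2 + \sum_(i < m) \sum_(j < m) d (p i) (p j)) => x y.
have [i hi] := hp x; have [j hj] := hp y.
have h1a := le_sum_term (fun j => d (p i) (p j)) j (fun k => d0 _ _).
have h1b := le_sum_term (fun i => \sum_(j < m) d (p i) (p j)) i
  (fun k => sumr_ge0 _ (fun l _ => d0 _ _)).
have h1 := le_trans h1a h1b.
apply: (le_trans (dtri x (p i) y)).
apply: (le_trans (lerD (lexx _) (dtri (p i) (p j) y))).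
rewrite (dsym (p j) y).
have : d x (p i) + (d (p i) (p j) + d y (p j)) <= 1 + (\sum_(i < m) \sum_(j < m) d (p i) (p j) + 1).
  by rewrite lerD ?lerD // ltW.
move/le_trans; apply; lra.
Qed.


Lemma haus_l (R : realType) (X : Type) (d : X -> X -> R) (hm : is_metric d)
  D (hD : forall x y, d x y <= D) (K C : set X) x e :
  C !=set0 -> K x -> hausdorff d K C < e -> dist_pt d x C < e.
Proof.
move=> [c Cc] Kx; apply: le_lt_trans; rewrite /hausdorff le_max; apply/orP; left.
apply: ub_le_sup; last by exists x.
exists D => _ [z Kz <-]; exact: (le_trans (dist_le hm Cc) (hD _ _)).
Qed.

Lemma haus_r (R : realType) (X : Type) (d : X -> X -> R) (hm : is_metric d)
  D (hD : forall x y, d x y <= D) (K C : set X) y e :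
  K !=set0 -> C y -> hausdorff d K C < e -> dist_pt d y K < e.
Proof.
move=> [c Kc] Cy; apply: le_lt_trans; rewrite /hausdorff le_max; apply/orP; right.
apply: ub_le_sup; last by exists y.
exists D => _ [z Kz <-]; exact: (le_trans (dist_le hm Kc) (hD _ _)).
Qed.

Lemma haus_lt (R : realType) (X : Type) (d : X -> X -> R)
  (K C : set X) r e : K !=set0 -> C !=set0 ->
  (forall x, K x -> dist_pt d x C <= r) -> (forall y, C y -> dist_pt d y K <= r) ->
  r < e -> hausdorff d K C < e.
Proof.
move=> [k Kk] [c Cc] h1 h2 re; rewrite /hausdorff gt_max; apply/andP; split.
- apply: le_lt_trans re; apply: ge_sup; first by exists (dist_pt d k C), k.
  by move=> _ [z Kz <-]; apply: h1.
- apply: le_lt_trans re; apply: ge_sup; first by exists (dist_pt d c K), c.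
  by move=> _ [z Kz <-]; apply: h2.
Qed.

Arguments haus_l {R X d} hm {D} hD {K C x e}.
Arguments haus_r {R X d} hm {D} hD {K C y e}.
Arguments haus_lt {R X d K C} r {e}.


Definition Uset (X : Type) (s : seq (set X)) (P : 'I_(size s) -> Prop) : set X :=
  [set x | exists i : 'I_(size s), P i /\ nth set0 s i x].
Arguments Uset {X}.

Lemma Uset_inA (X : Type) (A : set (set X)) (hAU : finite_union_property A)
  (s : seq (set X)) (hs : forall K, K \in s -> A K) (l : seq 'I_(size s)) :
  l != [::] -> A (Uset s (fun k => k \in l)).
Proof.
elim: l => [//|i l IH] _.
have Ai : A (nth set0 s i) by apply: hs; apply: mem_nth.
case: l IH => [|j l] IH.
  suff -> : Uset s (fun k => k \in [:: i]) = nth set0 s i by [].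
  apply/seteqP; split => [x [k [] ]|x hx]; last by exists i; rewrite inE eqxx.
  by rewrite inE => /eqP ->.
suff -> : Uset s (fun k => k \in [:: i, j & l]) = nth set0 s i `|` Uset s (fun k => k \in (j :: l)).
  by apply: hAU => //; apply: IH.
apply/seteqP; split => [x [k [] ]|x [hx|[k [hk hx]]]].
- rewrite inE => /orP[/eqP -> h|hk h]; first by left.
  by right; exists k.
- by exists i; rewrite inE eqxx.
- by exists k; rewrite inE hk orbT.
Qed.

Lemma Uset_enum (X : Type) (s : seq (set X)) (S : {set 'I_(size s)}) :
  Uset s (fun k => k \in S) = Uset s (fun k => k \in (enum S)).
Proof.
by apply/seteqP; split => x [k [hk hx]]; exists k; rewrite ?mem_enum in hk *.
Qed.

Lemma far (R : realType) (X : Type) (d : X -> X -> R) (hm : is_metric d)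
  (s : seq (set X)) e2
  (hsp : forall i j, (i < j < size s)%N -> Defs.split d e2 (nth set0 s i) (nth set0 s j))
  (i j : 'I_(size s)) x y : i != j -> nth set0 s i x -> nth set0 s j y -> e2 < d x y.
Proof.
case: hm => d0 _ dsym _.
have lb : forall (B C : set X), has_lbound [set d x y | x in B & y in C].
  by move=> B C; exists 0 => _ [a _ [b _ <-]]; apply: d0.
move=> ij hx hy; case: (ltngtP i j) => [lij|lji|eij].
- apply: (lt_le_trans (hsp i j _)); first by rewrite lij ltn_ord.
  by apply: ge_inf => //; exists x => //; exists y.
- apply: (lt_le_trans (hsp j i _)); first by rewrite lji ltn_ord.
  by rewrite dsym; apply: ge_inf => //; exists y => //; exists x.
- by move: ij; rewrite (val_inj eij) eqxx.
Qed.

Arguments far {R X d} hm {s e2} hsp {i j x y}.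

Lemma noinj (R : realType) (X : Type) (d : X -> X -> R) (hm : is_metric d)
  D (hD : forall x y, d x y <= D) (s : seq (set X)) e e2 (he : e + e <= e2)
  (hne : forall i : 'I_(size s), nth set0 s i !=set0)
  (hsp : forall i j, (i < j < size s)%N -> Defs.split d e2 (nth set0 s i) (nth set0 s j))
  (S S' : {set 'I_(size s)}) (i : 'I_(size s)) (C : set X) :
  i \in S -> i \notin S' -> S' != finset.set0 -> C !=set0 ->
  hausdorff d (Uset s (fun k => k \in S)) C < e ->
  hausdorff d (Uset s (fun k => k \in S')) C < e -> False.
Proof.
case: (hm) => d0 _ dsym dtri.
move=> iS iS' /set0Pn[j jS'] C0 h1 h2.
have [x Bx] := hne i.
have xU : Uset s (fun k => k \in S) x by exists i.
have [c Cc xc] := dist_lt C0 (haus_l hm hD C0 xU h1).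
have U'0 : Uset s (fun k => k \in S') !=set0.
  by have [y By] := hne j; exists y, j.
have [y [k [kS' By]] cy] := dist_lt U'0 (haus_r hm hD U'0 Cc h2).
have ik : i != k by apply/eqP => ik; move: iS'; rewrite ik kS'.
have := far hm hsp ik Bx By.
have := dtri x c y.
lra.
Qed.

Arguments noinj {R X d} hm {D} hD {s e e2} he hne hsp {S S' i C}.

Lemma card_setI n : #|{set 'I_n}| = (2 ^ n)%N.
Proof. by rewrite -cardsT -powersetT card_powerset cardsT card_ord. Qed.

Lemma count_cover (R : realType) (X : Type) (d : X -> X -> R) (hm : is_metric d)
  D (hD : forall x y, d x y <= D) (A : set (set X)) (hAK : A `<=` KX d)
  (hAU : finite_union_property A)
  (s : seq (set X)) e e2 (he : e + e <= e2)
  (hs : forall K, K \in s -> A K)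
  (hsp : forall i j, (i < j < size s)%N -> Defs.split d e2 (nth set0 s i) (nth set0 s j))
  (E : seq (set X)) (hEK : forall C, C \in E -> KX d C)
  (hEc : forall K, A K -> exists2 C, C \in E & hausdorff d K C < e) :
  (2 ^ size s <= (size E).+1)%N.
Proof.
pose P (S : {set 'I_(size s)}) (C : set X) :=
  `[< hausdorff d (Uset s (fun k => k \in S)) C < e >].
have hne : forall i : 'I_(size s), nth set0 s i !=set0.
  by move=> i; apply: (hAK _ (hs _ (mem_nth _ (ltn_ord i)))).1.
have hasP0 : forall S, S != finset.set0 -> has (P S) E.
  move=> S S0; have AU : A (Uset s (fun k => k \in S)).
    rewrite Uset_enum; apply: Uset_inA => //.
    by move: S0; apply: contra => /eqP e0; apply/eqP/setP => k; rewrite -mem_enum e0 !inE.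
  have [C CE hC] := hEc _ AU; apply/hasP; exists C => //; exact/asboolP.
pose f (S : {set 'I_(size s)}) : 'I_(size E).+1 :=
  if S == finset.set0 then ord_max else inord (find (P S) E).
have fval : forall S, S != finset.set0 -> val (f S) = find (P S) E /\ (find (P S) E < size E)%N.
  move=> S S0; rewrite /f (negbTE S0) /= inordK; last by rewrite ltnS find_size.
  by split => //; rewrite -has_find hasP0.
have finj : injective f.
  move=> S1 S2 hf.
  case: (eqVneq S1 finset.set0) => [E1|N1]; case: (eqVneq S2 finset.set0) => [E2|N2].
  - by rewrite E1 E2.
  - have [v2 l2] := fval _ N2; have := congr1 val hf.
    by rewrite v2 /f E1 eqxx /= => h; move: l2; rewrite -h ltnn.
  - have [v1 l1] := fval _ N1; have := congr1 val hf.
    by rewrite v1 /f E2 eqxx /= => h; move: l1; rewrite h ltnn.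
  - have [v1 l1] := fval _ N1; have [v2 l2] := fval _ N2.
    have efind : find (P S1) E = find (P S2) E by rewrite -v1 -v2 hf.
    set C := nth set0 E (find (P S1) E).
    have CE : C \in E by apply: mem_nth.
    have C0 : C !=set0 by apply: (hEK _ CE).1.
    have h1 : hausdorff d (Uset s (fun k => k \in S1)) C < e.
      by apply/asboolP; apply: (nth_find set0 (hasP0 _ N1)).
    have h2 : hausdorff d (Uset s (fun k => k \in S2)) C < e.
      by apply/asboolP; rewrite /C efind; apply: (nth_find set0 (hasP0 _ N2)).
    apply/setP => i; apply/idP/idP => hi; apply: contraT => hn; exfalso.
    + exact: (noinj hm hD he hne hsp hi hn N2 C0 h1 h2).
    + exact: (noinj hm hD he hne hsp hi hn N1 C0 h2 h1).
have := leq_card f finj.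
by rewrite card_setI card_ord.
Qed.


Lemma fin_closed (R : realType) (X : Type) (d : X -> X -> R) (hm : is_metric d)
  m (p : 'I_m -> X) (l : seq 'I_m) :
  d_closed d [set x | exists i, i \in l /\ x = p i].
Proof.
case: (hm) => d0 deq dsym dtri.
elim: l => [|a l IH] x H.
  by have [y [i []]] := H 1 ltr01.
have [/eqP dx0|dxn] := eqVneq (d x (p a)) 0.
  by exists a; rewrite inE eqxx; split => //; apply/deq/eqP.
have e0 : 0 < d x (p a) by rewrite lt_def dxn d0.
have : [set x | exists i, i \in l /\ x = p i] x.
  apply: IH => e ep.
  have mp : 0 < Num.min e (d x (p a)) by rewrite lt_min ep e0.
  have [y [i [hi ->]] hy] := H (Num.min e (d x (p a))) mp.
  move: hi; rewrite inE => /orP[/eqP ia|hi].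
    by move: hy; rewrite ia lt_min ltxx andbF.
  by exists (p i); [exists i | move: hy; rewrite lt_min => /andP[]].
by move=> [i [hi ->]]; exists i; rewrite inE hi orbT.
Qed.

Lemma cover_exists (R : realType) (X : Type) (d : X -> X -> R) (hm : is_metric d)
  (hc : d_compact d) (A : set (set X)) (hAK : A `<=` KX d) e : 0 < e ->
  exists E : seq (set X), (forall C, C \in E -> KX d C) /\
     (forall K, A K -> exists2 C, C \in E & hausdorff d K C < e).
Proof.
case: (hm) => d0 deq dsym dtri => e0.
have [m [p hp]] := net hm hc (e / 2) (divr_gt0 e0 (ltr0Sn _ 1)).
pose CS (T : {set 'I_m}) := [set x | exists i, i \in T /\ x = p i].
exists [seq CS T | T <- enum [set T : {set 'I_m} | T != finset.set0]]; split.
  move=> C /mapP[T]; rewrite mem_enum inE => /set0Pn[i iT] ->; split.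
    by exists (p i), i.
  have -> : CS T = [set x | exists i, i \in enum T /\ x = p i].
    by apply/seteqP; split => x [k [hk ->]]; exists k; rewrite ?mem_enum in hk *.
  exact: fin_closed.
move=> K AK; have [[k Kk] _] := hAK _ AK.
pose T := ([set i : 'I_m | `[< dist_pt d (p i) K < e / 2 >]])%SET.
have inT : forall x i, K x -> d x (p i) < e / 2 -> i \in T.
  move=> x i Kx h; rewrite inE; apply/asboolP.
  by apply: le_lt_trans (dist_le hm Kx) _; rewrite dsym.
have [i0 hi0] := hp k.
exists (CS T).
  apply/mapP; exists T => //; rewrite mem_enum inE; apply/set0Pn; exists i0.
  exact: inT hi0.
apply: (haus_lt (e / 2)); [by exists k| by exists (p i0), i0; split => //; apply: inT hi0 | | |].
- move=> x Kx; have [i hi] := hp x.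
  apply: le_trans (dist_le hm (_ : CS T (p i))) _; last exact: ltW.
  by exists i; split => //; apply: inT hi.
- by move=> y [i [iT ->]]; move: iT; rewrite inE => /asboolP/ltW.
- lra.
Qed.


Definition cst_c (R : realType) : R := ln (ln 2 / 2).

Lemma ln2_gt0 (R : realType) : 0 < ln (2 : R).
Proof. by apply: ln_gt0; rewrite ltr1n. Qed.

Lemma cst_c_lt0 (R : realType) : cst_c R < 0.
Proof.
apply: ln_lt0; have h := ln2_gt0 R; have h2 := @ln_sublinear R 2 (ltr0Sn _ 1).
apply/andP; split; first by apply: divr_gt0.
by rewrite ltr_pdivrMr //; lra.
Qed.

Lemma LL_ge (R : realType) (m : nat) : (1 <= m)%N -> cst_c R <= ln (ln (m%:R : R)).
Proof.
move=> m1; have c0 := cst_c_lt0 R; have l2 := ln2_gt0 R.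
case: m m1 => [//|[_|m _]].
  by rewrite ln1 (ln0 (lexx 0)); apply: ltW.
have hm : ln (2 : R) <= ln (m.+2%:R : R).
  by rewrite ler_ln ?posrE ?ltr0n // ler_nat.
apply: (@le_trans _ _ (ln (ln (2 : R)))).
  rewrite /cst_c ler_ln ?posrE //; last by apply: divr_gt0.
  by rewrite ler_pdivrMr //; lra.
by rewrite ler_ln ?posrE //; apply: lt_le_trans hm.
Qed.

Lemma n_bound (R : realType) (m n : nat) : (1 <= m)%N -> (2 ^ n <= m.+1)%N ->
  (n%:R : R) <= expR (ln (ln (m%:R : R)) - cst_c R).
Proof.
move=> m1 hn; have c0 := cst_c_lt0 R; have l2 := ln2_gt0 R.
have LL := @LL_ge R m m1.
case: n hn => [_|[_|n hn]].
- exact: ltW (expR_gt0 _).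
- by rewrite -[X in X <= _]expR0 ler_expR; lra.
have hm : (2 ^ n.+1 <= m)%N.
  have p : (0 < 2 ^ n.+1)%N by rewrite expn_gt0.
  by move: hn; rewrite (expnS 2 n.+1); lia.
have hmR : (2 : R) ^+ n.+1 <= m%:R by rewrite -natrX ler_nat.
have h1 : ln ((2 : R) ^+ n.+1) <= ln (m%:R : R).
  by rewrite ler_ln ?posrE ?exprn_gt0 //; apply: lt_le_trans hmR; apply: exprn_gt0.
rewrite lnXn // in h1.
have h2 : (n.+2%:R : R) * (ln 2 / 2) <= ln (m%:R : R).
  apply: le_trans h1; rewrite -[ln 2 *+ _]mulr_natr -addn2 -addn1 !natrD.
  have := ler0n R n; set N := n%:R; set l := ln 2 => N0.
  have -> : (N + 2%:R) * (l / 2) = (l * N + l * 2) / 2 by field.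
  rewrite ler_pdivrMr // -(natr1 (R:=R) n) -/N.
  have l2p : 0 < l by []. nra.
have p2 : 0 < ln (R:=R) 2 / 2 by apply: divr_gt0.
have pn : (0 : R) < n.+2%:R by rewrite ltr0n.
have h3 : ln (n.+2%:R : R) + cst_c R <= ln (ln (m%:R : R)).
  rewrite /cst_c -lnM ?posrE // ler_ln ?posrE //; first exact: mulr_gt0.
  by apply: lt_le_trans h2; exact: mulr_gt0.
rewrite -[X in X <= _](lnK (_ : (n.+2%:R : R) \in Num.pos)) ?posrE //.
by rewrite ler_expR; lra.
Qed.


Arguments dbound {R X d} hm hc.
Arguments cover_exists {R X d} hm hc {A} hAK {e}.
Arguments count_cover {R X d} hm {D} hD {A} hAK hAU {s e e2} he hs hsp {E} hEK hEc.
Arguments n_bound {R m n}.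

Lemma key (R : realType) (X : Type) (d : X -> X -> R) (hm : is_metric d)
  (hc : d_compact d) (A : set (set X)) (hAK : A `<=` KX d) (hA0 : A !=set0)
  (hAU : finite_union_property A) e e2 : 0 < e -> e + e <= e2 ->
  ln (fine (Bnum d A e2)) + cst_c R <= ln (ln (fine (Ncov d A e))).
Proof.
move=> e0 he.
have [D hD] := dbound hm hc.
pose coverP (E : seq (set X)) := (forall C, C \in E -> KX d C) /\
  (forall K, A K -> exists2 C, C \in E & hausdorff d K C < e).
have [m [[E [[cE1 cE2] sE]] mmin]] : exists m, (exists E, coverP E /\ size E = m) /\
    forall k, (exists E, coverP E /\ size E = k) -> (m <= k)%N.
  apply: (@nat_has_minimum [set n | exists E, coverP E /\ size E = n]).
  by have [E hE] := cover_exists hm hc hAK e0; exists (size E), E.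
have hN : Ncov d A e = (m%:R)%:E.
  apply/eqP; rewrite eq_le; apply/andP; split.
    by apply: ereal_inf_lbound; exists E => //; rewrite sE.
  apply: le_ereal_inf_tmp => _ [E' hE' <-]; rewrite lee_fin ler_nat.
  by apply: mmin; exists E'.
have m1 : (1 <= m)%N.
  have [K0 AK0] := hA0; have [C CE _] := cE2 _ AK0.
  by rewrite -sE; case: E CE {cE1 cE2 sE} => [|? ?].
have hB : forall s : seq (set X), (forall K, K \in s -> A K) ->
    (forall i j, (i < j < size s)%N -> Defs.split d e2 (nth set0 s i) (nth set0 s j)) ->
    (2 ^ size s <= m.+1)%N.
  by move=> s hs hsp; rewrite -sE; exact: (count_cover hm hD hAK hAU he hs hsp cE1 cE2).
set M := expR (ln (ln (m%:R : R)) - cst_c R).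
have hBM : (Bnum d A e2 <= M%:E)%E.
  apply: ge_ereal_sup => _ [s [hs hsp] <-]; rewrite lee_fin.
  exact: n_bound m1 (hB s hs hsp).
have hB0 : (0%:E <= Bnum d A e2)%E.
  apply: le_ereal_sup_tmp; exists 0%:E => //; exists [::] => //; split => //.
  by move=> i j; rewrite andbC.
rewrite hN /=.
have LL := @LL_ge R m m1.
move: (Bnum d A e2) hB0 hBM => [r||] //=; rewrite ?lee_fin => r0 rM.
have [->|rn0] := eqVneq r 0; first by rewrite (ln0 (lexx 0)) add0r.
have rp : 0 < r by rewrite lt_def rn0 r0.
have : ln r <= ln M by rewrite ler_ln ?posrE // expR_gt0.
rewrite /M expRK; lra.
Qed.


Lemma ereal_le_by_reals (R : realType) (x y : \bar R) :
  (forall r : R, (r%:E < x)%E -> (r%:E <= y)%E) -> (x <= y)%E.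
Proof.
case: x => [x||] h; case: y h => [y||] h //; try by rewrite ?leey ?leNye.
- rewrite lee_fin.
  rewrite leNgt.
  apply/negP => yx.
  have := h ((x + y) / 2).
  rewrite !lte_fin !lee_fin.
  lra.
- have H := h (x - 1); suff : ((x - 1)%:E <= -oo)%E by [].
  by apply: H; rewrite lte_fin; lra.
- have := h (y + 1); rewrite lee_fin ltry => H; exfalso; have := H isT; lra.
- have := h 0; rewrite ltry => H; by have := H isT.
Qed.

Lemma at_right0_delta (R : realType) (V : set R) :
  (0^'+) V -> exists2 del, 0 < del & forall x, 0 < x < del -> V x.
Proof.
move=> /nbhs_ballP[del del0 H]; exists del => // x /andP[x0 xd].
apply: H => //; rewrite /ball /= sub0r normrN gtr0_norm //.
Qed.

Lemma at_right0_mk (R : realType) (eta : R) : 0 < eta ->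
  (0^'+) [set x | 0 < x < eta].
Proof.
move=> eta0; apply/nbhs_ballP; exists eta => // x.
rewrite /ball /= sub0r normrN => h x0; rewrite /= x0 /=.
by move: h; rewrite gtr0_norm.
Qed.

Local Open Scope ereal_scope.

Theorem lemma4p6 (R : realType) (X : Type) (d : X -> X -> R)
  (hmetric : is_metric d) (hcompact : d_compact d)
  (A : set (set X)) (hAK : A `<=` KX d) (hA0 : A !=set0)
  (hAU : finite_union_property A) :
  lower_B_dim d A <= lower_mo d A.
Proof.
rewrite /lower_B_dim /lower_mo !limf_einfE.
apply: ge_ereal_sup => _ [V FV <-].
apply: ereal_le_by_reals => l' hl'.
apply: ereal_le_by_reals => l; rewrite lte_fin => hl.
have hV : forall eps, V eps -> (l' < ln (fine (Bnum d A eps)) / (- ln eps))%R.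
  move=> eps Veps; rewrite -lte_fin; apply: lt_le_trans hl' _.
  by apply: ereal_inf_lbound; exists eps.
have [del del0 hdel] := @at_right0_delta R V FV.
set c := cst_c R.
set K0 := ((l' * ln 2 - c) / (l' - l))%R.
set eta := (Num.min (Num.min (del / 2) (1 / 2)) (expR (- K0)))%R.
have eta0 : (0 < eta)%R.
  by rewrite !lt_min !divr_gt0 ?expR_gt0 ?ltr01 ?ltr0Sn.
apply: le_ereal_sup_tmp; eexists.
  by exists [set x | (0 < x < eta)%R]; [exact: at_right0_mk | reflexivity].
apply: le_ereal_inf_tmp => _ [eps /andP[e0 eeta] <-]; rewrite lee_fin.
move: eeta; rewrite !lt_min => /andP[/andP[edel ehalf] eK].
have e2 : (0 < 2 * eps)%R by rewrite mulr_gt0.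
have h2d : (0 < 2 * eps < del)%R.
  by rewrite e2 /=; move: edel; rewrite ltr_pdivlMr //; lra.
have V2 := hV (2 * eps)%R (hdel _ h2d).
have hee : (eps + eps <= 2 * eps)%R by lra.
have hk := @key _ _ _ hmetric hcompact _ hAK hA0 hAU eps (2 * eps)%R e0 hee.
move: V2 hk; set b := ln (fine (Bnum d A (2 * eps))); set LL := ln (ln _) => V2 hk.
have l2 := ln2_gt0 R.
have ln2e : ln (2 * eps) = (ln 2 + ln eps)%R by rewrite lnM ?posrE.
have hneg : (ln (2 * eps) < 0)%R.
  by apply: ln_lt0; rewrite e2 /=; move: ehalf; rewrite ltr_pdivlMr //; lra.
have tpos : (0 < - ln eps)%R.
  rewrite oppr_gt0; apply: ln_lt0; rewrite e0 /=; move: ehalf; rewrite ltr_pdivlMr //; lra.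
have hK : (K0 <= - ln eps)%R.
  have : (ln eps < ln (expR (- K0)))%R by rewrite ltr_ln ?posrE ?expR_gt0.
  rewrite expRK; lra.
have hll : (0 < l' - l)%R by lra.
rewrite /K0 ler_pdivrMr // in hK.
rewrite ln2e in V2 hneg; rewrite ltr_pdivlMr in V2; last lra.
rewrite ler_pdivlMr //.
move: hK; rewrite /c => hK; nra.
Qed.
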